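(* For every $f\in V$, the operator $\mathscr L_f:V\to V$ is not a compact operator; that is, for every neighborhood $U$ of $0$ in $V$, the closure of $\mathscr L_f(U)$ is not compact.
   Context: Let $N\ge2$, $\mathbf A$ an $N\times N$ zero-one aperiodic matrix, $\Sigma_{\mathbf A}^+=\{\omega\in\{1,\dots,N\}^{\mathbb N\cup\{0\}}:\mathbf A(\omega_m\omega_{m+1})=1\ \forall m\}$ with shift $\sigma_{\mathbf A}$. $\mathrm{var}_m(\phi)=\sup\{|\phi(\omega)-\phi(\omega')|:\omega_k=\omega'_k,\ 0\le k\le m-1\}$; $V=\{\phi:\Sigma_{\mathbf A}^+\to\mathbb C:\mathrm{var}_m(\phi)^{1/m}\to0\}$ with the (Fréchet) topology generated by the norms $\|\phi\|_\theta=\|\phi\|_\infty+[\phi]_\theta$, $\theta\in(0,1)$, $[\phi]_\theta$ the Lipschitz constant w.r.t. $d_\theta(\omega,\omega')=\theta^{\min\{m:\omega_m\ne\omega'_m\}}$. $(\mathscr L_f\phi)(\omega)=\sum_{\sigma_{\mathbf A}\omega'=\omega}e^{f(\omega')}\phi(\omega')$. A continuous linear operator $T$ on a metrizable complete topological vector space is compact if the closure of $T(U)$ is compact for some neighborhood $U$ of zero. *)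

(* Defs.v *)
From Stdlib Require Import Reals List.
From Coquelicot Require Import Coquelicot.
From mathcomp Require Import ssreflect ssrfun ssrbool eqtype ssrnat seq fintype bigop.

Set Implicit Arguments.
Unset Strict Implicit.
Unset Printing Implicit Defensive.

Section Shift.
Variable N : nat.
Variable A : 'I_N -> 'I_N -> bool.  (* zero-one matrix: A i j = true <-> entry 1 *)

(* A is aperiodic: some power A^M (M >= 1) has all entries positive, i.e. for
   all i j there is an A-admissible path of length M from i to j. *)
Definition aperiodic : Prop :=
  exists M : nat, (1 <= M)%N /\
    forall i j : 'I_N, exists w : nat -> 'I_N,
      w 0%N = i /\ w M = j /\ forall k, (k < M)%N -> A (w k) (w k.+1).

Definition Sigma := { w : nat -> 'I_N | forall m, A (w m) (w m.+1) }.

Definition sq (w : Sigma) : nat -> 'I_N := proj1_sig w.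

Definition scons (i : 'I_N) (w : nat -> 'I_N) : nat -> 'I_N :=
  fun m => match m with 0 => i | S k => w k end.

Lemma scons_adm (i : 'I_N) (w : Sigma) :
  A i (sq w 0%N) = true -> forall m, A (scons i (sq w) m) (scons i (sq w) m.+1).
Proof. move=> h [|m] //=. exact: (proj2_sig w m). Qed.

Definition pre (i : 'I_N) (w : Sigma) : option Sigma :=
  match A i (sq w 0%N) as b return A i (sq w 0%N) = b -> option Sigma with
  | true => fun h => Some (exist _ (scons i (sq w)) (scons_adm h))
  | false => fun _ => None
  end erefl.

Definition cexp (z : C) : C :=
  (exp (fst z) * cos (snd z), exp (fst z) * sin (snd z))%R.

(* Ruelle transfer operator:
   (L_f phi)(w) = sum_{w' : shift w' = w} e^{f w'} phi w'
   the preimages of w being exactly the admissible i.w *)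
Definition transfer (f phi : Sigma -> C) (w : Sigma) : C :=
  \big[Cplus/RtoC 0]_(i < N)
     match pre i w with
     | Some w' => Cmult (cexp (f w')) (phi w')
     | None => RtoC 0
     end.

Definition var (m : nat) (phi : Sigma -> C) : Rbar :=
  Lub_Rbar (fun r => exists w w' : Sigma,
     (forall k, (k < m)%N -> sq w k = sq w' k) /\ r = Cmod (Cminus (phi w) (phi w'))).

(* phi in V  <->  var_m(phi)^{1/m} -> 0, i.e. for every eps > 0,
   eventually var_m(phi) < eps^m *)
Definition inV (phi : Sigma -> C) : Prop :=
  forall eps : R, (0 < eps)%R ->
    exists M : nat, forall m : nat, (M <= m)%N -> Rbar_lt (var m phi) (Rbar.Finite (pow eps m)).

Definition supnorm (phi : Sigma -> C) : Rbar :=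
  Lub_Rbar (fun r => exists w : Sigma, r = Cmod (phi w)).

(* n is min{m : w_m <> w'_m}, so that d_theta(w,w') = theta^n *)
Definition first_diff (w w' : Sigma) (n : nat) : Prop :=
  sq w n <> sq w' n /\ forall k, (k < n)%N -> sq w k = sq w' k.

Definition lipconst (theta : R) (phi : Sigma -> C) : Rbar :=
  Lub_Rbar (fun r => exists (w w' : Sigma) (n : nat),
     first_diff w w' n /\ r = (Cmod (Cminus (phi w) (phi w')) / pow theta n)%R).

Definition norm_theta (theta : R) (phi : Sigma -> C) : Rbar :=
  Rbar_plus (supnorm phi) (lipconst theta phi).

Definition fsub (phi psi : Sigma -> C) : Sigma -> C := fun w => Cminus (phi w) (psi w).

(* Neighbourhoods in the (Frechet) topology on V generated by the norms
   ||.||_theta, 0 < theta < 1: U subset of V containing a finite intersection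
   of balls {phi in V : ||phi - psi||_theta < eps}. *)
Definition nbhsV (psi : Sigma -> C) (U : (Sigma -> C) -> Prop) : Prop :=
  (forall phi, U phi -> inV phi) /\
  exists (thetas : list R) (eps : R), (0 < eps)%R /\
    (forall theta, In theta thetas -> (0 < theta < 1)%R) /\
    forall phi, inV phi ->
      (forall theta, In theta thetas -> Rbar_lt (norm_theta theta (fsub phi psi)) (Rbar.Finite eps)) ->
      U phi.

Definition openV (O : (Sigma -> C) -> Prop) : Prop :=
  (forall phi, O phi -> inV phi) /\ forall psi, O psi -> nbhsV psi O.

Definition closureV (S : (Sigma -> C) -> Prop) : (Sigma -> C) -> Prop :=
  fun psi => inV psi /\ forall U, nbhsV psi U -> exists phi, U phi /\ S phi.

Definition compactV (K : (Sigma -> C) -> Prop) : Prop :=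
  (forall phi, K phi -> inV phi) /\
  forall Cov : ((Sigma -> C) -> Prop) -> Prop,
    (forall O, Cov O -> openV O) ->
    (forall phi, K phi -> exists O, Cov O /\ O phi) ->
    exists l : list ((Sigma -> C) -> Prop),
      (forall O, In O l -> Cov O) /\ (forall phi, K phi -> exists O, In O l /\ O phi).

End Shift.

Definition image_of {X Y : Type} (T : X -> Y) (U : X -> Prop) : Y -> Prop :=
  fun y => exists x, U x /\ y = T x.

(* Main.v *)
Require Import Defs.
From Stdlib Require Import Reals List Lra Lia.
From Coquelicot Require Import Coquelicot.
From mathcomp Require Import ssreflect ssrfun ssrbool eqtype ssrnat seq fintype bigop.
From mathcomp Require Import zify.
From HB Require Import structures.
Open Scope R_scope.

Lemma abs_sin_le x : Rabs (sin x) <= Rabs x.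
Proof.
  assert (H : forall y, 0 <= y -> Rabs (sin y) <= y).
  { intros y hy. destruct (Rle_lt_dec y 1) as [h1|h1].
    - destruct (Req_dec y 0) as [->|hn]. rewrite sin_0 Rabs_R0; lra.
      have hs := sin_lt_x y ltac:(lra).
      have hs0 := sin_ge_0 y hy ltac:(have := PI2_1; lra).
      rewrite Rabs_pos_eq; lra.
    - have := SIN_bound y. intros. apply Rabs_le; lra. }
  destruct (Rle_dec 0 x) as [h|h].
  - rewrite (Rabs_pos_eq x h); auto.
  - rewrite -(Ropp_involutive x) sin_neg Rabs_Ropp Rabs_Ropp (Rabs_pos_eq (- x)); [|lra].
    apply H; lra.
Qed.

Lemma cos_lip a b : Rabs (cos a - cos b) <= Rabs (a - b).
Proof.
  rewrite form2 Rabs_mult Rabs_mult.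
  have h1 := abs_sin_le ((a - b) / 2).
  have h2 : Rabs (sin ((a + b) / 2)) <= 1 by apply Rabs_le; have := SIN_bound ((a+b)/2); lra.
  have h3 : Rabs ((a - b) / 2) = Rabs (a - b) / 2.
  { unfold Rdiv. rewrite Rabs_mult (Rabs_pos_eq (/2)); lra. }
  rewrite h3 in h1. rewrite (Rabs_left (-2)); try lra.
  have := Rabs_pos (sin ((a - b) / 2)). have := Rabs_pos (sin ((a + b) / 2)). nra.
Qed.

Lemma sin_lip a b : Rabs (sin a - sin b) <= Rabs (a - b).
Proof.
  rewrite form4 Rabs_mult Rabs_mult.
  have h1 := abs_sin_le ((a - b) / 2).
  have h2 : Rabs (cos ((a + b) / 2)) <= 1 by apply Rabs_le; have := COS_bound ((a+b)/2); lra.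
  have h3 : Rabs ((a - b) / 2) = Rabs (a - b) / 2.
  { unfold Rdiv. rewrite Rabs_mult (Rabs_pos_eq (/2)); lra. }
  rewrite h3 in h1. rewrite (Rabs_pos_eq 2); try lra.
  have := Rabs_pos (sin ((a - b) / 2)). have := Rabs_pos (cos ((a + b) / 2)). nra.
Qed.

Lemma exp_m1 d : Rabs d <= 1 -> Rabs (exp d - 1) <= 3 * Rabs d.
Proof.
  intros hd.
  have l := exp_ineq1_le d.
  have u := exp_ineq1_le (- d).
  have e : exp d * exp (- d) = 1 by rewrite -exp_plus; replace (d + - d) with 0 by ring; apply exp_0.
  have p := exp_pos d.
  have e1 : exp d <= 3.
  { apply Rle_trans with (exp 1). destruct (Req_dec d 1) as [->|]; [lra|].
    left; apply exp_increasing. have := Rabs_le_between d 1; intros [h _]; specialize (h hd); lra.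
    exact exp_le_3. }
  have u2 : exp d - 1 <= d * exp d by nra.
  apply Rabs_le. destruct (Rle_dec 0 d) as [h|h].
  - rewrite Rabs_pos_eq //. split; nra.
  - rewrite Rabs_left; [|lra]. split; nra.
Qed.

Lemma exp_lip a b : Rabs (a - b) <= 1 -> Rabs (exp a - exp b) <= 3 * exp b * Rabs (a - b).
Proof.
  intros h. replace (exp a - exp b) with (exp b * (exp (a - b) - 1)).
  2:{ rewrite Rmult_minus_distr_l -exp_plus. replace (b + (a - b)) with a by ring. ring. }
  rewrite Rabs_mult (Rabs_pos_eq (exp b)); [|left; apply exp_pos].
  have := exp_m1 (a - b) h. have := exp_pos b. nra.
Qed.

Lemma Cmod_le_sum (z : C) : Cmod z <= Rabs (fst z) + Rabs (snd z).
Proof.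
  unfold Cmod. have p1 := Rabs_pos (fst z); have p2 := Rabs_pos (snd z).
  rewrite -(sqrt_pow2 (Rabs (fst z) + Rabs (snd z))); [|lra].
  apply sqrt_le_1_alt. rewrite -(pow2_abs (fst z)) -(pow2_abs (snd z)). nra.
Qed.

Lemma cexp_lip (x y : C) : Rabs (fst x - fst y) <= 1 ->
  Cmod (Cminus (cexp x) (cexp y)) <= 8 * exp (fst y) * Cmod (Cminus x y).
Proof.
  intros h. destruct x as [a1 b1], y as [a2 b2]. simpl in h |- *.
  have r1 := Rmax_Cmod (Cminus (a1, b1) (a2, b2)). simpl in r1.
  have ha : Rabs (a1 + - a2) <= Cmod (Cminus (a1,b1) (a2,b2)) by eapply Rle_trans; [|exact r1]; apply Rmax_l.
  have hb : Rabs (b1 + - b2) <= Cmod (Cminus (a1,b1) (a2,b2)) by eapply Rle_trans; [|exact r1]; apply Rmax_r.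
  eapply Rle_trans; [apply Cmod_le_sum|]. unfold cexp. simpl.
  have E := exp_lip a1 a2 h. have pe := exp_pos a2.
  have c1 := cos_lip b1 b2. have s1 := sin_lip b1 b2.
  have cb : Rabs (cos b1) <= 1 by apply Rabs_le; have := COS_bound b1; lra.
  have sb : Rabs (sin b1) <= 1 by apply Rabs_le; have := SIN_bound b1; lra.
  have X1 : Rabs (exp a1 * cos b1 + - (exp a2 * cos b2)) <= Rabs (exp a1 - exp a2) + exp a2 * Rabs (cos b1 - cos b2).
  { replace (exp a1 * cos b1 + - (exp a2 * cos b2)) with ((exp a1 - exp a2) * cos b1 + exp a2 * (cos b1 - cos b2)) by ring.
    eapply Rle_trans; [apply Rabs_triang|]. rewrite !Rabs_mult (Rabs_pos_eq (exp a2)); [|lra].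
    have := Rabs_pos (exp a1 - exp a2). nra. }
  have X2 : Rabs (exp a1 * sin b1 + - (exp a2 * sin b2)) <= Rabs (exp a1 - exp a2) + exp a2 * Rabs (sin b1 - sin b2).
  { replace (exp a1 * sin b1 + - (exp a2 * sin b2)) with ((exp a1 - exp a2) * sin b1 + exp a2 * (sin b1 - sin b2)) by ring.
    eapply Rle_trans; [apply Rabs_triang|]. rewrite !Rabs_mult (Rabs_pos_eq (exp a2)); [|lra].
    have := Rabs_pos (exp a1 - exp a2). nra. }
  unfold Rminus in *. nra.
Qed.

Lemma Cmod_cexp x : Cmod (cexp x) = exp (fst x).
Proof.
  unfold Cmod, cexp. cbn [fst snd].
  replace ((exp (fst x) * cos (snd x)) ^ 2 + (exp (fst x) * sin (snd x)) ^ 2) with ((exp (fst x))^2)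
    by (have := sin2_cos2 (snd x); unfold Rsqr; intros; nra).
  apply sqrt_pow2. left; apply exp_pos.
Qed.
Open Scope R_scope.

Lemma lub_le (E : R -> Prop) (X : R) : (forall r, E r -> r <= X) -> Rbar_le (Lub_Rbar E) X.
Proof. intros h. have [_ H] := Lub_Rbar_correct E. apply H. intros r hr. exact (h r hr). Qed.

Lemma le_lub (E : R -> Prop) r : E r -> Rbar_le r (Lub_Rbar E).
Proof. intros h. have [H _] := Lub_Rbar_correct E. exact (H r h). Qed.

Lemma plus_lt_extract (s l : Rbar) (r e : R) : Rbar_le 0 s -> Rbar_le r l ->
  Rbar_lt (Rbar_plus s l) e -> r < e.
Proof.
  destruct s as [s| |], l as [l| |]; simpl; intros; try tauto; lra.
Qed.

Lemma plus_lt_build (x y : Rbar) (a b e : R) : Rbar_le x a -> Rbar_le y b -> a + b < e ->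
  Rbar_lt (Rbar_plus x y) e.
Proof.
  destruct x as [x| |], y as [y| |]; simpl; intros; try tauto; lra.
Qed.

Section Main.
Variables (N : nat) (A : 'I_N -> 'I_N -> bool) (hN : (2 <= N)%N) (hA : aperiodic A).

Lemma row_ne i : exists j, A i j.
Proof.
  have [M [hM h]] := hA. have [w [w0 [_ hw]]] := h i i.
  exists (w 1%N). rewrite -w0. apply hw. lia.
Qed.

Definition succ i := odflt i [pick j | A i j].

Lemma succ_adm i : A i (succ i).
Proof.
  rewrite /succ. case: pickP => [j hj //|h0]. have [j hj] := row_ne i. by rewrite h0 in hj.
Qed.

Definition extz (w : nat -> 'I_N) (M : nat) (k : nat) : 'I_N :=
  if (k <= M)%N then w k else iter (k - M) succ (w M).

Lemma extz_adm w M : (forall k, (k < M)%N -> A (w k) (w k.+1)) ->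
  forall k, A (extz w M k) (extz w M k.+1).
Proof.
  intros hw k. rewrite /extz. case: (leqP k.+1 M) => h1.
  - rewrite (leq_trans (leqnSn k) h1). apply hw. exact h1.
  - case: (leqP k M) => h2.
    + have -> : (k = M) by lia. rewrite subSnn /=. apply succ_adm.
    + have -> : (k.+1 - M = (k - M).+1)%N by lia. rewrite iterS. apply succ_adm.
Qed.

Definition splice_f (x w : nat -> 'I_N) (L M : nat) (j : nat) : 'I_N :=
  if (j <= L)%N then x j else extz w M (j - L).

Lemma splice (x w : nat -> 'I_N) (L M : nat) :
  (forall k, (k < L)%N -> A (x k) (x k.+1)) -> w 0%N = x L ->
  (forall k, (k < M)%N -> A (w k) (w k.+1)) ->
  exists y : Sigma A, (forall k, (k <= L)%N -> sq y k = x k) /\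
                      (forall k, (k <= M)%N -> sq y (L + k)%N = w k).
Proof.
  intros hx h0 hw.
  have adm : forall j, A (splice_f x w L M j) (splice_f x w L M j.+1).
  { intros j. rewrite /splice_f. case: (leqP j.+1 L) => h1.
    - rewrite (leq_trans (leqnSn j) h1). apply hx. exact h1.
    - case: (leqP j L) => h2.
      + have e : j = L by lia. subst j. rewrite subSnn.
        have := extz_adm w M hw 0. rewrite {1}/extz leq0n h0. done.
      + have -> : (j.+1 - L = (j - L).+1)%N by lia. apply extz_adm, hw. }
  exists (exist _ (splice_f x w L M) adm). split.
  - intros k hk. rewrite /sq /= /splice_f hk. done.
  - intros k hk. rewrite /sq /= /splice_f /extz.
    case: (leqP (L + k) L) => h1.
    + have e : k = 0%N by lia. subst k. rewrite addn0. done.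
    + have -> : (L + k - L = k)%N by lia. rewrite hk. done.
Qed.

End Main.
Open Scope R_scope.

HB.instance Definition _ := Monoid.isComLaw.Build C (RtoC 0) Cplus Cplus_assoc Cplus_comm Cplus_0_l.

Section T.
Variables (N : nat) (A : 'I_N -> 'I_N -> bool).

Lemma pre_spec i (w : Sigma A) : match Defs.pre i w with Some w' => sq w' = scons i (sq w) | None => A i (sq w 0) = false end.
Proof.
  rewrite /Defs.pre. move: (@erefl _ (A i (sq w 0))).
  case: {2 3}(A i (sq w 0)) => e //=.
Qed.

Definition agreeb (x y : nat -> 'I_N) (L : nat) : bool := all (fun k => x k == y k) (iota 0 L).

Lemma agreeP x y L : reflect (forall k, (k < L)%N -> x k = y k) (agreeb x y L).
Proof.
  apply: (iffP allP) => h k.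
  - move=> hk. apply/eqP/h. rewrite mem_iota. lia.
  - rewrite mem_iota => /andP[_ hk]. apply/eqP/h. lia.
Qed.

Lemma agreeb_scons i j x y L : agreeb (scons i x) (scons j y) L.+1 = (i == j) && agreeb x y L.
Proof.
  apply/idP/idP.
  - move/agreeP => h. apply/andP; split. apply/eqP. exact (h 0%N erefl).
    apply/agreeP => k hk. exact (h k.+1 hk).
  - move/andP=> [/eqP -> /agreeP h]. apply/agreeP => [[|k]] hk //=. apply h. lia.
Qed.

Definition phi (v : nat -> 'I_N) (L : nat) (c : R) : Sigma A -> C :=
  fun x => if agreeb (sq x) v L then RtoC c else RtoC 0.

Lemma transfer_val (f : Sigma A -> C) (i0 : 'I_N) (u : Sigma A) (n : nat) (c : R) (w : Sigma A) :
  (0 < n)%N -> A i0 (sq u 0) ->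
  (agreeb (sq w) (sq u) n -> exists wb, sq wb = scons i0 (sq w) /\
       transfer f (phi (scons i0 (sq u)) n.+1 c) w = Cmult (cexp (f wb)) (RtoC c)) /\
  (~~ agreeb (sq w) (sq u) n -> transfer f (phi (scons i0 (sq u)) n.+1 c) w = RtoC 0).
Proof.
  intros hn hA0. rewrite /transfer (bigD1 i0) //= big1.
  2:{ intros i hi. have := pre_spec i w. case: (Defs.pre i w) => [w'|] // e.
      rewrite /phi. have -> : agreeb (sq w') (scons i0 (sq u)) n.+1 = false.
      { rewrite e agreeb_scons. by rewrite (negbTE hi). }
      apply injective_projections; simpl; ring. }
  have := pre_spec i0 w. case: (Defs.pre i0 w) => [w'|] e.
  - rewrite /phi e agreeb_scons eqxx /=. split.
    + move=> ->. exists w'. split => //. apply injective_projections; simpl; ring.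
    + move/negbTE => ->. apply injective_projections; simpl; ring.
  - split.
    + move/agreeP => h. rewrite (h 0%N hn) in e. by rewrite e in hA0.
    + move=> _. apply injective_projections; simpl; ring.
Qed.
End T.
Open Scope R_scope.

Lemma pow_dec (x : R) (m n : nat) : 0 <= x <= 1 -> (m <= n)%N -> x ^ n <= x ^ m.
Proof.
  intros hx hmn. have -> : n = (m + (n - m))%nat by lia. rewrite pow_add.
  have h1 : x ^ (n - m) <= 1 by rewrite -(pow1 (n - m)); apply pow_incr; lra.
  have h2 : 0 <= x ^ m by apply pow_le; lra.
  have h3 : 0 <= x ^ (n - m) by apply pow_le; lra. nra.
Qed.

Lemma pow2_ge n : INR n <= 2 ^ n.
Proof.
  elim: n => [|n IH]; first by simpl; lra.
  rewrite S_INR /=. have := pow_le 2 n ltac:(lra). have : 1 <= 2 ^ n by apply pow_R1_Rle; lra. lra.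
Qed.

Lemma Cminus_RtoC (a b : R) : Cminus (RtoC a) (RtoC b) = RtoC (a - b).
Proof. apply injective_projections; simpl; ring. Qed.

Lemma Cminus_0 (z : C) : Cminus z (RtoC 0) = z.
Proof. apply injective_projections; simpl; ring. Qed.

Lemma Cminus_self (z : C) : Cminus z z = RtoC 0.
Proof. apply injective_projections; simpl; ring. Qed.

Lemma Rbar_le_lt (r q : R) (x : Rbar) : Rbar_le r x -> Rbar_lt x q -> r < q.
Proof. intros h1 h2. have := Rbar_le_lt_trans _ _ _ h1 h2. simpl. done. Qed.

Section Main.
Variables (N : nat) (A : 'I_N -> 'I_N -> bool).

Definition Oj (tp : R) (j : nat) (g : Sigma A -> C) : Prop :=
  inV g /\ exists L, L < 1 /\ forall w w' n, first_diff w w' n -> (j <= n)%N ->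
     Cmod (Cminus (g w) (g w')) / tp ^ n <= L.

Lemma supnorm_ge0 (b : Sigma A) (g : Sigma A -> C) : Rbar_le 0 (supnorm g).
Proof.
  apply Rbar_le_trans with (Rbar.Finite (Cmod (g b))). simpl; apply Cmod_ge_0.
  apply le_lub. by exists b.
Qed.

Lemma Oj_open (b : Sigma A) tp j : 0 < tp < 1 -> openV (Oj tp j).
Proof.
  intros htp. split; first by move=> g [].
  move=> psi [hpsi [L [hL hb]]]. split; first by move=> g [].
  exists (tp :: nil), ((1 - L) / 2). split; first lra. split.
  { move=> th [<-|[]]; lra. }
  move=> g hg hn. split; first done. exists (L + (1 - L) / 2). split; first lra.
  intros w w' n hd hj.
  have h := hn tp (or_introl erefl). rewrite /norm_theta in h.
  have hmem : Rbar_le (Cmod (Cminus (fsub g psi w) (fsub g psi w')) / tp ^ n) (lipconst tp (fsub g psi)).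
  { apply le_lub. exists w, w', n. done. }
  have hr := plus_lt_extract _ _ _ _ (supnorm_ge0 b _) hmem h.
  have hp := hb w w' n hd hj.
  have e : Cminus (g w) (g w') = Cplus (Cminus (fsub g psi w) (fsub g psi w')) (Cminus (psi w) (psi w')).
  { rewrite /fsub. apply injective_projections; simpl; ring. }
  have tri := Cmod_triangle (Cminus (fsub g psi w) (fsub g psi w')) (Cminus (psi w) (psi w')).
  rewrite -e in tri.
  have pn : 0 < / tp ^ n by apply Rinv_0_lt_compat, pow_lt; lra.
  unfold Rdiv in *. 
  have := Rmult_le_compat_r (/ tp ^ n) _ _ (Rlt_le _ _ pn) tri. lra.
Qed.

Lemma Oj_cover tp g : 0 < tp < 1 -> inV g -> exists j, Oj tp j g.
Proof.
  intros htp hg. have [M hM] := hg (tp / 2) ltac:(lra).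
  exists (maxn M 1). split; first done. exists (/2). split; first lra.
  intros w w' n [hd ha] hj.
  have h1 := le_lub (fun r => exists w w' : Sigma A,
     (forall k, (k < n)%N -> sq w k = sq w' k) /\ r = Cmod (Cminus (g w) (g w')))
     (Cmod (Cminus (g w) (g w'))) ltac:(exists w, w'; done).
  have h2 := hM n ltac:(lia).
  have h3 := Rbar_le_lt _ _ _ h1 h2.
  have e : (tp / 2) ^ n = tp ^ n * (/ 2) ^ n by rewrite /Rdiv Rpow_mult_distr.
  have hq : (/2) ^ n <= /2.
  { have := pow_dec (/2) 1 n ltac:(lra) ltac:(lia). simpl. lra. }
  have pn : 0 < tp ^ n by apply pow_lt; lra.
  apply (Rmult_le_reg_r (tp ^ n)); first done.
  unfold Rdiv. rewrite Rmult_assoc Rinv_l; [|lra]. nra.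
Qed.

Lemma zero_norm th (g : Sigma A -> C) e : 0 < e -> Rbar_lt (norm_theta th (fsub g g)) e.
Proof.
  intros he. apply (plus_lt_build _ _ 0 0); last lra.
  - apply lub_le. move=> r [w ->]. rewrite /fsub Cminus_self Cmod_0. lra.
  - apply lub_le. move=> r [w [w' [n [_ ->]]]]. rewrite /fsub !Cminus_self Cmod_0. unfold Rdiv; lra.
Qed.

End Main.
Open Scope R_scope.

Lemma agreeb_congr N (x x' v : nat -> 'I_N) L q :
  (forall k, (k < q)%N -> x k = x' k) -> (L <= q)%N -> agreeb N x v L = agreeb N x' v L.
Proof.
  intros h hL. apply/idP/idP => /agreeP H; apply/agreeP => k hk.
  - rewrite -h; [apply H|]; lia.
  - rewrite h; [apply H|]; lia.
Qed.

Lemma exp_mono a b : a <= b -> exp a <= exp b.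
Proof. intros h. destruct (Rle_lt_or_eq_dec _ _ h) as [h'|h'].
  - left; apply exp_increasing; lra.
  - rewrite h'; lra. Qed.

Lemma fst_le_Cmod (z w : C) : Rabs (fst z - fst w) <= Cmod (Cminus z w).
Proof. have := re_le_Cmod (Cminus z w). simpl. unfold Rminus. done. Qed.

Section W.
Variables (N : nat) (A : 'I_N -> 'I_N -> bool) (hN : (2 <= N)%N) (hA : aperiodic A).
Variables (f : Sigma A -> C) (hf : inV f).

Lemma witness (t eps : R) (thetas : list R) (U : (Sigma A -> C) -> Prop)
  (ht : 0 < t < 1) (heps : 0 < eps)
  (hth : forall th, In th thetas -> t <= th /\ th < 1)
  (hU : forall phi, inV phi -> (forall th, In th thetas ->
          Rbar_lt (norm_theta th (fsub phi (fun _ => RtoC 0))) eps) -> U phi)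
  (k : nat) :
  exists psi, closureV (image_of (transfer f) U) psi /\
    exists w w' n, first_diff w w' n /\ (k <= n)%N /\
       1 <= Cmod (Cminus (psi w) (psi w')) / (t / 2) ^ n.
Proof.
  have h0N : (0 < N)%N by lia. have h1N : (1 < N)%N by lia.
  set s0 : 'I_N := Ordinal h0N. set s1 : 'I_N := Ordinal h1N.
  have [b _] := splice N A hN hA (fun _ => s0) (fun _ => s0) 0 0 ltac:(lia) erefl ltac:(lia).
  set i0 := sq b 0.
  have [Mf hMf] := hf 1 Rlt_0_1.
  have hbase : forall z, (forall j, (j < Mf)%N -> sq z j = sq b j) -> Cmod (Cminus (f z) (f b)) < 1.
  { intros z hz. have hm : Rbar_le (Cmod (Cminus (f z) (f b))) (Defs.var Mf f).
    { apply le_lub. exists z, b. done. }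
    have := Rbar_le_lt _ _ _ hm (hMf Mf (leqnn _)). rewrite pow1. done. }
  set δ := eps / 3.
  set E0 := exp (fst (f b) - 1).
  have hE0 : 0 < E0 by apply exp_pos.
  have ht2 : 0 < t ^ 2 by apply pow_lt; lra.
  set G := / (δ * t ^ 2 * E0).
  have [k0 hk0] : exists k0, G <= 2 ^ k0.
  { have [n hn] := INR_archimed 1 G Rlt_0_1. exists n. have := pow2_ge n. lra. }
  set P := maxn (maxn k Mf) (maxn k0 1).
  set L := (P - 1)%N.
  have hLP : (L.+1 = P)%N by rewrite /L /P; lia.
  set x := fun j => sq b j.+1.
  have [M [hM hpath]] := hA.
  have [w1 [w10 [w1M w1a]]] := hpath (sq b P) s0.
  have [w2 [w20 [w2M w2a]]] := hpath (sq b P) s1.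
  have hx : forall j, (j < L)%N -> A (x j) (x j.+1) by move=> j _; exact: (proj2_sig b j.+1).
  have hxL : x L = sq b P by rewrite /x hLP.
  have [u [hu1 hu2]] := splice N A hN hA x w1 L M hx ltac:(by rewrite hxL) w1a.
  have [u' [hu1' hu2']] := splice N A hN hA x w2 L M hx ltac:(by rewrite hxL) w2a.
  have hex : exists j, sq u j != sq u' j.
  { exists (L + M)%N. rewrite hu2 // hu2' // w1M w2M. done. }
  case: (ex_minnP hex) => m hm hmin.
  have hlo : forall j, (j <= L)%N -> sq u j = sq u' j by move=> j hj; rewrite hu1 // hu1'.
  have hmP : (P <= m)%N.
  { case: (leqP P m) => // hlt. have := hlo m ltac:(lia). move/eqP: hm. done. }
  have hfd : first_diff u u' m.
  { split; first by apply/eqP. intros j hj. apply/eqP.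
    case E: (sq u j == sq u' j) => //. have := hmin j; rewrite E => /(_ isT). lia. }
  have hA0 : A i0 (sq u 0).
  { rewrite hu1 // /x. exact: (proj2_sig b 0%N). }
  have hδ : 0 < δ by rewrite /δ; lra.
  set c := δ * t ^ m.+2.
  have htm : 0 < t ^ m.+2 by apply pow_lt; lra.
  have hc : 0 < c by rewrite /c; nra.
  set phi0 := phi N A (scons i0 (sq u)) m.+2 c.
  set psi := transfer f phi0.
  have tv : forall w, _ := fun w => transfer_val N A f i0 u m.+1 c w (ltn0Sn m) hA0.
  have hcyl : forall w wb : Sigma A, agreeb N (sq w) (sq u) m.+1 -> sq wb = scons i0 (sq w) ->
      Cmod (Cminus (f wb) (f b)) < 1.
  { intros w wb hag hwb. apply hbase => j hj. rewrite hwb. case: j hj => [|j] hj //=.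
    move/agreeP: hag => hag. rewrite hag; [|lia]. rewrite hu1; [|lia]. done. }

  have hphiv : forall w, phi0 w = RtoC (if agreeb N (sq w) (scons i0 (sq u)) m.+2 then c else 0).
  { move=> w. rewrite /phi0 /phi. by case: agreeb. }
  have hphiV : inV phi0.
  { intros ε hε. exists m.+2. intros q hq.
    apply Rbar_le_lt_trans with (Rbar.Finite 0); last by simpl; apply pow_lt.
    apply lub_le. move=> r [w [w' [hww ->]]].
    rewrite !hphiv (agreeb_congr N (sq w) (sq w') _ m.+2 q hww hq) Cminus_self Cmod_0. lra. }
  have hphiN : forall th, In th thetas -> Rbar_lt (norm_theta th (fsub phi0 (fun _ => RtoC 0))) eps.
  { move=> th hin. have [hth1 hth2] := hth th hin.
    have hcd : c <= δ.
    { rewrite /c. have : t ^ m.+2 <= 1 by rewrite -(pow1 m.+2); apply pow_incr; lra. nra. }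
    have hδe : δ = eps / 3 by []. apply (plus_lt_build _ _ c δ); last lra.
    - apply lub_le. move=> r [w ->]. rewrite /fsub Cminus_0 hphiv Cmod_R.
      case: agreeb; rewrite ?Rabs_R0 ?Rabs_pos_eq; lra.
    - apply lub_le. move=> r [w [w' [n [[hne hagr] ->]]]]. rewrite /fsub !Cminus_0 !hphiv.
      have hthn : 0 < th ^ n by apply pow_lt; lra.
      case: (leqP m.+2 n) => hn.
      + rewrite (agreeb_congr N (sq w) (sq w') _ m.+2 n hagr hn) Cminus_self Cmod_0.
        unfold Rdiv; rewrite Rmult_0_l; lra.
      + have key : forall a, 0 <= a <= c -> a / th ^ n <= δ.
        { intros a ha. have h1 : t ^ m.+2 <= th ^ n.
          { apply Rle_trans with (t ^ n). apply pow_dec; [lra|lia]. apply pow_incr; lra. }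
          apply Rle_trans with (c / t ^ m.+2).
          { unfold Rdiv; apply Rmult_le_compat; try lra.
            left; apply Rinv_0_lt_compat; lra. apply Rinv_le_contravar; lra. }
          rewrite /c. right. field. lra. }
        rewrite Cminus_RtoC Cmod_R. apply key. split; first apply Rabs_pos.
        case: agreeb; case: agreeb; apply Rabs_le; lra. }
  have hpsiV : inV psi.
  { intros ε hε.
    set D := 8 * c * exp (fst (f b) + 1).
    have hD : 0 < D by (rewrite /D; have := exp_pos (fst (f b) + 1); nra).
    set ε' := Rmin ε (/ (D + 1)).
    have hε'1 : ε' <= ε by apply Rmin_l. have hε'2 : ε' <= / (D + 1) by apply Rmin_r.
    have hε'0 : 0 < ε' by apply Rmin_pos; [lra | apply Rinv_0_lt_compat; lra].
    have hinv : D * / (D + 1) < 1.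
    { apply (Rmult_lt_reg_r (D + 1)); [lra|]. rewrite Rmult_assoc Rinv_l; lra. }
    have hinv1 : / (D + 1) < 1.
    { apply (Rmult_lt_reg_r (D + 1)); [lra|]. rewrite Rinv_l; lra. }
    have hDe : D * ε' < 1 by nra.
    have [Mf' hMf'] := hf ε' hε'0.
    exists (maxn Mf' m.+1). intros q hq.
    have hpq : 0 <= ε' ^ q.+1 by apply pow_le; lra.
    apply Rbar_le_lt_trans with (Rbar.Finite (D * ε' ^ q.+1)).
    - apply lub_le. move=> r [w [w' [hww ->]]].
      have hcong := agreeb_congr N (sq w) (sq w') (sq u) m.+1 q hww ltac:(lia).
      case E: (agreeb N (sq w) (sq u) m.+1).
      + have E' : agreeb N (sq w') (sq u) m.+1 by rewrite -hcong E.
        have [wb [hwb e1]] := (tv w).1 E. have [wb' [hwb' e2]] := (tv w').1 E'.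
        rewrite /psi e1 e2.
        have ee : Cminus (Cmult (cexp (f wb)) (RtoC c)) (Cmult (cexp (f wb')) (RtoC c))
                  = Cmult (Cminus (cexp (f wb)) (cexp (f wb'))) (RtoC c).
        { apply injective_projections; simpl; ring. }
        rewrite ee Cmod_mult Cmod_R (Rabs_pos_eq c); [|lra].
        have hff : Cmod (Cminus (f wb) (f wb')) < ε' ^ q.+1.
        { have hmm : Rbar_le (Cmod (Cminus (f wb) (f wb'))) (Defs.var q.+1 f).
          { apply le_lub. exists wb, wb'. split; last done.
            intros j hj. rewrite hwb hwb'. case: j hj => [|j] hj //=. apply hww. lia. }
          exact (Rbar_le_lt _ _ _ hmm (hMf' q.+1 ltac:(lia))). }
        have hq1 : ε' ^ q.+1 <= 1 by rewrite -(pow1 q.+1); apply pow_incr; lra.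
        have hre := fst_le_Cmod (f wb) (f wb').
        have hl := cexp_lip (f wb) (f wb') ltac:(lra).
        have hb' := hcyl w' wb' E' hwb'.
        have hre' := fst_le_Cmod (f wb') (f b).
        have hex' : exp (fst (f wb')) <= exp (fst (f b) + 1).
        { apply exp_mono. have := Rabs_le_between (fst (f wb') - fst (f b)) 1. intros [h _].
          have := h ltac:(lra). lra. }
        have := exp_pos (fst (f wb')). have := Cmod_ge_0 (Cminus (f wb) (f wb')).
        have := Cmod_ge_0 (Cminus (cexp (f wb)) (cexp (f wb'))).
        rewrite /D. intros. 
        apply Rle_trans with (8 * exp (fst (f wb')) * Cmod (Cminus (f wb) (f wb')) * c).
        { apply Rmult_le_compat_r; lra. }
        have : 8 * exp (fst (f wb')) * Cmod (Cminus (f wb) (f wb')) <= 8 * exp (fst (f b) + 1) * ε' ^ q.+1.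
        { apply Rmult_le_compat; try lra. }
        nra.
      + have E' : ~~ agreeb N (sq w') (sq u) m.+1 by rewrite -hcong E.
        rewrite /psi (tv w).2; last by rewrite E.
        rewrite (tv w').2 // Cminus_self Cmod_0. have := pow_le ε' q.+1. nra.
    - simpl. have h1 : ε' ^ q <= ε ^ q by apply pow_incr; lra.
      have h2 : 0 < ε ^ q by apply pow_lt.
      have h3 : 0 <= ε' ^ q by apply pow_le; lra.
      have e : ε' ^ q.+1 = ε' * ε' ^ q by [].
      have h4 : D * ε' * ε' ^ q <= D * ε' * ε ^ q by apply Rmult_le_compat_l; nra.
      have h5 : D * ε' * ε ^ q < ε ^ q by nra.
      move: e h4 h5. simpl. intros. lra. }
  have hcl : closureV (image_of (transfer f) U) psi.
  { split; first done. move=> U' [_ [th' [e' [he' [_ hU']]]]]. exists psi. split.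
    - apply hU'; first done. move=> th _. apply zero_norm. done.
    - exists phi0. split; last done. apply hU; done. }
  exists psi. split; first done. exists u, u', m. split; first done. split; first lia.
  have hag : agreeb N (sq u) (sq u) m.+1 by apply/agreeP.
  have [wb [hwb e1]] := (tv u).1 hag.
  have hnag : ~~ agreeb N (sq u') (sq u) m.+1.
  { apply/negP => /agreeP h. move/eqP: hm. rewrite (h m (ltnSn m)). done. }
  have e2 := (tv u').2 hnag.
  rewrite /psi e1 e2 Cminus_0 Cmod_mult Cmod_cexp Cmod_R Rabs_pos_eq; [|lra].
  have hlow : E0 <= exp (fst (f wb)).
  { apply exp_mono. have := hcyl u wb hag hwb. have := fst_le_Cmod (f wb) (f b).
    have := Rabs_le_between (fst (f wb) - fst (f b)) 1. intros [h _] h1 h2.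
    have := h ltac:(lra). lra. }
  have htm' : 0 < t ^ m by apply pow_lt; lra.
  have hY : 0 < (t / 2) ^ m by apply pow_lt; lra.
  apply (Rmult_le_reg_r ((t / 2) ^ m)); first done.
  unfold Rdiv. rewrite Rmult_assoc Rinv_l; [|lra]. rewrite Rmult_1_l Rmult_1_r.
  have eY : (t / 2) ^ m = t ^ m * / 2 ^ m by rewrite /Rdiv Rpow_mult_distr pow_inv.
  have ec : c = δ * t ^ 2 * t ^ m by rewrite /c; replace (m.+2) with (Nat.add m 2) by lia; rewrite pow_add; ring.
  have h2m : G <= 2 ^ m.
  { apply Rle_trans with (2 ^ k0); first done. apply Rle_pow; [lra|lia]. }
  have hG : 0 < G by rewrite /G; apply Rinv_0_lt_compat; nra.
  have hi : / 2 ^ m <= / G by apply Rinv_le_contravar.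
  have eG : / G = δ * t ^ 2 * E0 by rewrite /G Rinv_inv.
  rewrite eY ec. rewrite eG in hi.
  have := pow_le t 2 ltac:(lra). nra.
Qed.
End W.
Open Scope R_scope.

Lemma tmin_spec (l : list R) : (forall th, In th l -> 0 < th < 1) ->
  (0 < fold_right Rmin (/2) l <= /2) /\ forall th, In th l -> fold_right Rmin (/2) l <= th.
Proof.
  elim: l => [|a l IH] h /=.
  - split; [lra | done].
  - have [[h1 h2] h3] := IH (fun th hth => h th (or_intror hth)).
    have ha := h a (or_introl erefl).
    split.
    + split. apply Rmin_pos; lra. apply Rle_trans with (fold_right Rmin (/ 2) l); [apply Rmin_r|lra].
    + move=> th [<-|hin]. apply Rmin_l. apply Rle_trans with (fold_right Rmin (/ 2) l); [apply Rmin_r|auto].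
Qed.

Lemma list_bound {X : Type} (P : X -> nat -> Prop) (l : list X) :
  (forall O, In O l -> exists j, P O j) -> exists B, forall O, In O l -> exists j, (j <= B)%N /\ P O j.
Proof.
  elim: l => [|a l IH] h. exists 0%N. done.
  have [B hB] := IH (fun O hO => h O (or_intror hO)).
  have [ja hja] := h a (or_introl erefl).
  exists (maxn B ja). move=> O [<-|hin].
  - exists ja. split; [lia|done].
  - have [j [hj hPj]] := hB O hin. exists j. split; [lia|done].
Qed.

Theorem theoremA1 (N : nat) (A : 'I_N -> 'I_N -> bool)
  (hN : (2 <= N)%N) (hA : aperiodic A)
  (f : Sigma A -> C) (hf : inV f) :
  forall U : (Sigma A -> C) -> Prop,
    nbhsV (fun _ => RtoC 0) U ->
    ~ compactV (closureV (image_of (transfer f) U)).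
Proof.
  move=> U [_ [thetas [eps [heps [hth hU]]]]] [hKV hcov].
  have [[ht1 ht2] ht3] := tmin_spec thetas hth.
  set t := fold_right Rmin (/2) thetas in ht1 ht2 ht3.
  have h0N : (0 < N)%N by lia.
  have [b _] := splice N A hN hA (fun _ => Ordinal h0N) (fun _ => Ordinal h0N) 0 0 ltac:(lia) erefl ltac:(lia).
  have htp : 0 < t / 2 < 1 by lra.
  have [l [hl hlcov]] := hcov (fun O => exists j, O = Oj N A (t / 2) j)
    ltac:(move=> O [j ->]; exact: Oj_open b _ _ htp)
    ltac:(move=> phi hphi; have [j hj] := Oj_cover N A (t / 2) phi htp (hKV phi hphi);
          exists (Oj N A (t / 2) j); split; [exists j; done | done]).
  have [B hB] := list_bound (fun O j => O = Oj N A (t / 2) j) l hl.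
  have hth' : forall th, In th thetas -> t <= th /\ th < 1.
  { move=> th hin. split; [exact: ht3 | have := hth th hin; lra]. }
  have [psi [hK [w [w' [n [hfd [hn hr]]]]]]] :=
    witness N A hN hA f hf t eps thetas U ltac:(lra) heps hth' hU B.
  have [O [hin hO]] := hlcov psi hK.
  have [j [hj eO]] := hB O hin. rewrite eO in hO.
  move: hO => [_ [L [hL hb]]]. have := hb w w' n hfd ltac:(lia). lra.
Qed.
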